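(* Let $Q$ be the quiver arising from a connected finite groupoid. Then $Q$ satisfies the quantum Yang–Baxter equation.
   Context: The quiver arising from a groupoid $\mathcal{G}$ (finitely many objects, finite hom-sets) has the objects as vertices and one arrow $x\to y$ for each morphism in $\mathrm{Hom}(x,y)$ (identities included); its adjacency matrix is $A_{xy}=|\mathrm{Hom}(x,y)|$. The groupoid is connected if $\mathrm{Hom}(x,y)\neq\emptyset$ for all objects $x,y$. An $m^2\times m^2$ matrix $X$ satisfies the quantum Yang–Baxter equation if $(X\otimes I_m)(I_m\otimes X)(X\otimes I_m)=(I_m\otimes X)(X\otimes I_m)(I_m\otimes X)$ ($\otimes$ the Kronecker product). A quiver with $m\times m$ adjacency matrix $A$ satisfies the quantum Yang–Baxter equation if the matrix $A\otimes A$ does. *)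

(* Defs.v *)
From mathcomp Require Import all_boot all_order all_algebra.
From mathcomp Require Export mxtens.
Set Implicit Arguments. Unset Strict Implicit. Unset Printing Implicit Defensive.
Import GRing.Theory.
Local Open Scope ring_scope.

Record finGroupoid := FinGroupoid {
  gobj : finType;
  ghom : gobj -> gobj -> finType;
  gid : forall x, ghom x x;
  gcomp : forall x y z, ghom y z -> ghom x y -> ghom x z;
  ginv : forall x y, ghom x y -> ghom y x;
  gcompA : forall w x y z (f : ghom w x) (g : ghom x y) (h : ghom y z),
      gcomp h (gcomp g f) = gcomp (gcomp h g) f;
  gcomp1l : forall x y (f : ghom x y), gcomp (gid y) f = f;
  gcomp1r : forall x y (f : ghom x y), gcomp f (gid x) = f;
  gcompVl : forall x y (f : ghom x y), gcomp (ginv f) f = gid x;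
  gcompVr : forall x y (f : ghom x y), gcomp f (ginv f) = gid y
}.

Definition groupoid_connected (G : finGroupoid) : Prop :=
  forall x y : gobj G, (0 < #|ghom x y|)%N.

(* Adjacency matrix of the quiver arising from G (vertices = objects,
   enumerated via enum_val; one arrow x -> y per morphism in Hom(x,y)):
   A_xy = |Hom(x,y)|, with integer entries. *)
Definition groupoid_adj (G : finGroupoid) : 'M[int]_(#|gobj G|) :=
  \matrix_(i, j) (#|ghom (enum_val i) (enum_val j)|%:Z).

Definition QYBE (R : pzRingType) (m : nat) (X : 'M[R]_(m * m)) : Prop :=
  let XI : 'M[R]_(m * m * m) := X *t (1%:M : 'M[R]_m) in
  let IX : 'M[R]_(m * m * m) :=
    castmx (mulnA m m m, mulnA m m m) ((1%:M : 'M[R]_m) *t X) in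
  XI *m IX *m XI = IX *m XI *m IX.

Definition quiver_QYBE (m : nat) (A : 'M[int]_m) : Prop := QYBE (A *t A).

(* Main.v *)
Require Import Defs.
From mathcomp Require Import all_boot all_order all_algebra.
From mathcomp Require Import zify ring.
Set Implicit Arguments. Unset Strict Implicit. Unset Printing Implicit Defensive.
Import GRing.Theory.
Local Open Scope ring_scope.

Section Core.
Variable R : comPzRingType.
Variable m : nat.

Definition e3 (a b d : 'I_m) : 'I_(m * m * m) := mxtens_index (mxtens_index (a, b), d).

Lemma sum3 (F : 'I_(m * m * m) -> R) :
  \sum_j F j = \sum_(a < m) \sum_(b < m) \sum_(d < m) F (e3 a b d).
Proof.
rewrite (reindex (@mxtens_index (m * m) m)); last first.
  by exists (@mxtens_unindex (m * m) m) => x _; rewrite ?mxtens_indexK ?mxtens_unindexK.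
rewrite (eq_bigr (fun p => F (mxtens_index (p.1, p.2)))); last by case.
rewrite -(pair_bigA _ (fun ab d => F (mxtens_index (ab, d)))) /=.
rewrite (reindex (@mxtens_index m m)); last first.
  by exists (@mxtens_unindex m m) => x _; rewrite ?mxtens_indexK ?mxtens_unindexK.
rewrite (eq_bigr (fun p => \sum_(d < m) F (mxtens_index (mxtens_index (p.1, p.2), d)))); last by case.
by rewrite -(pair_bigA _ (fun a b => \sum_(d < m) F (mxtens_index (mxtens_index (a, b), d)))).
Qed.

Lemma e3P (k : 'I_(m * m * m)) : exists a b d, k = e3 a b d.
Proof.
case: (mxtens_indexP k) => ab d; case: (mxtens_indexP ab) => a b.
by exists a, b, d.
Qed.

Lemma sum_delta (i0 : 'I_m) (F : 'I_m -> R) :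
  \sum_i (i0 == i)%:R * F i = F i0.
Proof.
rewrite (bigD1 i0) //= eqxx mul1r big1 ?addr0 // => i.
by rewrite eq_sym => /negbTE ->; rewrite mul0r.
Qed.

Lemma sum_delta' (i0 : 'I_m) (F : 'I_m -> R) :
  \sum_i (i == i0)%:R * F i = F i0.
Proof. by rewrite -[RHS]sum_delta; apply: eq_bigr => i _; rewrite eq_sym. Qed.

Lemma e3cast (pf : (m * m * m = m * (m * m))%N) a b d :
  cast_ord pf (e3 a b d) = mxtens_index (a, mxtens_index (b, d)).
Proof. apply: val_inj => /=. lia. Qed.

Lemma core (X : 'M[R]_(m * m)) c : (forall i j, X i j = c) -> QYBE X.
Proof.
move=> HX; rewrite /QYBE.
set P := X *t _. set Q := castmx _ _.
have Pe : forall a b d a' b' d', P (e3 a b d) (e3 a' b' d') = (d == d')%:R * c.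
  by move=> *; rewrite /P tensmxE HX mxE mulrC.
have Qe : forall a b d a' b' d', Q (e3 a b d) (e3 a' b' d') = (a == a')%:R * c.
  by move=> *; rewrite /Q castmxE !e3cast tensmxE HX mxE.
have PQ : forall k l, (P *m Q) k l = c * c * m%:R.
  move=> k l; case: (e3P k) => a [b [d ->]]; case: (e3P l) => a' [b' [d' ->]].
  rewrite mxE sum3.
  under eq_bigr => x _ do under eq_bigr => y _ do
    (under eq_bigr => z _ do rewrite Pe Qe; rewrite -mulr_suml sum_delta).
  transitivity (\sum_x (a' == x)%:R * (c * c * m%:R)).
    by apply: eq_bigr => x _; rewrite sumr_const card_ord eq_sym -mulr_natr; ring.
  by rewrite sum_delta.
have QP : forall k l, (Q *m P) k l = c * c * m%:R.
  move=> k l; case: (e3P k) => a [b [d ->]]; case: (e3P l) => a' [b' [d' ->]].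
  rewrite mxE sum3.
  under eq_bigr => x _ do under eq_bigr => y _ do
    (under eq_bigr => z _ do rewrite Qe Pe; rewrite -mulr_sumr sum_delta').
  transitivity (\sum_x (a == x)%:R * (c * c * m%:R)).
    by apply: eq_bigr => x _; rewrite sumr_const card_ord -mulr_natr; ring.
  by rewrite sum_delta.
have colP : forall l, \sum_j P j l = c * (m * m)%:R.
  move=> l; case: (e3P l) => a' [b' [d' ->]]; rewrite sum3.
  under eq_bigr => x _ do under eq_bigr => y _ do
    (under eq_bigr => z _ do rewrite Pe; rewrite sum_delta').
  by rewrite sumr_const card_ord sumr_const card_ord -mulrnA mulr_natr.
have colQ : forall l, \sum_j Q j l = c * (m * m)%:R.
  move=> l; case: (e3P l) => a' [b' [d' ->]]; rewrite sum3.
  under eq_bigr => x _ do under eq_bigr => y _ do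
    (under eq_bigr => z _ do rewrite Qe).
  transitivity (\sum_x (x == a')%:R * (c * (m * m)%:R)).
    apply: eq_bigr => x _; rewrite exchange_big /=.
    by rewrite sumr_const card_ord sumr_const card_ord -mulrnA mulr_natr mulrnAr.
  by rewrite sum_delta'.
apply/matrixP => k l; rewrite !mxE.
under eq_bigr => j _ do rewrite PQ.
rewrite -mulr_sumr colP.
under eq_bigr => j _ do rewrite QP.
rewrite -mulr_sumr colQ.
by [].
Qed.
End Core.

Section Grpd.
Variable G : finGroupoid.

Lemma cancel_l (x y z : gobj G) (h : ghom y z) (u : ghom x y) : gcomp (ginv h) (gcomp h u) = u.
Proof. by rewrite gcompA gcompVl gcomp1l. Qed.
Lemma cancel_r (x y z : gobj G) (g : ghom y z) (k : ghom x y) : gcomp (gcomp g k) (ginv k) = g.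
Proof. by rewrite -gcompA gcompVr gcomp1r. Qed.

Lemma card_hom_le : groupoid_connected G ->
  forall x y x' y' : gobj G, (#|ghom x y| <= #|ghom x' y'|)%N.
Proof.
move=> conn x y x' y'.
have /card_gt0P [k _] := conn x' x.
have /card_gt0P [h _] := conn y y'.
apply: (@leq_card _ _ (fun g => gcomp h (gcomp g k))) => g1 g2 E.
by rewrite -(cancel_r g1 k) -(cancel_r g2 k) -(cancel_l h (gcomp g1 k)) E cancel_l.
Qed.
End Grpd.

Theorem corollary2p14 (G : finGroupoid) :
  groupoid_connected G -> quiver_QYBE (groupoid_adj G).
Proof.
move=> conn; rewrite /quiver_QYBE.
case: (pickP (gobj G)) => [x0 _ | none].
  have H : forall x y : gobj G, #|ghom x y| = #|ghom x0 x0|.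
    by move=> x y; apply/eqP; rewrite eqn_leq !card_hom_le.
  apply: (@core _ _ _ ((#|ghom x0 x0|%:Z) * (#|ghom x0 x0|%:Z))) => i j.
  by rewrite !mxE !H.
apply: (@core _ _ _ 0) => -[n Hn]; exfalso.
by move: Hn; rewrite (eq_card0 none).
Qed.
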